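(* Let $G$ be a group of order $N$, let $d\geqslant2$ be an integer, and let $\delta>0$ and $\varepsilon>0$ satisfy $0<\delta<\min\{\varepsilon/4,1/(4d)\}$ and $N^{\delta}\geqslant 4^{d+2}d^{d+3}$, with $N$ sufficiently large. Then the $\delta$-dependency graph $H$ has an independent set $I$ of size at least $N^{1-3\delta}$ such that, for each $x\in I$ and each $1\leqslant k\leqslant d$, the hypergraph $\Gamma_x$ has at most $N^{k-1+\delta}$ edges of size $k$.
   Context: For $x\in G\setminus\{1\}$, $\Gamma_x$ is the hypergraph with vertex set $G\setminus\{1\}$ whose edges are the subsets $E\subseteq G\setminus\{1\}$ for which there exist an integer $\ell$ with $|E|\leqslant\ell\leqslant d$, elements $h_1,\ldots,h_\ell\in E$ (not necessarily distinct) and signs $a_1,\ldots,a_\ell\in\{-1,1\}$ such that every element of $E$ appears at least once among $h_1,\ldots,h_\ell$ and $h_1^{a_1}\cdots h_\ell^{a_\ell}=x$. The $\delta$-dependency graph $H$ has vertex set $G\setminus\{1\}$, with $x\neq y$ adjacent iff for some integers $r,s,t$ with $d\geqslant r,s\geqslant t\geqslant1$ there are at least $N^{r+s-t-1-\delta}$ pairs $(e,f)$ where $e$ is an edge of $\Gamma_x$ with $|e|=r$, $f$ is an edge of $\Gamma_y$ with $|f|=s$, and $|e\cap f|=t$. *)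

(* Defs.v *)
From HB Require Import structures.
From mathcomp Require Import all_boot all_order all_algebra all_fingroup.
From mathcomp Require Import reals exp.
Set Implicit Arguments. Unset Strict Implicit. Unset Printing Implicit Defensive.
Import Order.TTheory GRing.Theory Num.Theory.

Section Defs.
Variable gT : finGroupType.
Local Open Scope group_scope.

Definition is_edge (d : nat) (x : gT) (E : {set gT}) : bool :=
  (1 \notin E) &&
  [exists l : 'I_d.+1, (#|E| <= l)%N &&
    [exists h : {ffun 'I_l -> gT}, [exists a : {ffun 'I_l -> bool},
      [&& [forall i, h i \in E], [forall y in E, [exists i, h i == y]]
        & (\prod_(i < l) (if a i then h i else (h i)^-1)) == x]]]].

Definition edges_of_size (d : nat) (x : gT) (k : nat) : {set {set gT}} :=
  [set E | is_edge d x E & #|E| == k].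

Definition pair_count (d : nat) (x y : gT) (r s t : nat) : nat :=
  #|[set p : {set gT} * {set gT} |
      [&& p.1 \in edges_of_size d x r, p.2 \in edges_of_size d y s
        & #|p.1 :&: p.2| == t]]|.
End Defs.

Local Open Scope ring_scope.

Definition dep_adj (R : realType) (gT : finGroupType) (d : nat) (delta : R)
    (x y : gT) : Prop :=
  x != 1%g /\ y != 1%g /\ x != y /\
  exists r s t : nat,
    (r <= d)%N /\ (s <= d)%N /\ (t <= r)%N /\ (t <= s)%N /\ (1 <= t)%N /\
    #|gT|%:R `^ ((r + s - t - 1)%N%:R - delta) <= (pair_count d x y r s t)%:R.

Definition dep_independent (R : realType) (gT : finGroupType) (d : nat)
    (delta : R) (I : {set gT}) : Prop :=
  (1%g \notin I) /\
  (forall x y, x \in I -> y \in I -> x != y -> ~ dep_adj d delta x y).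

(* Main.v *)
From HB Require Import structures.
From mathcomp Require Import all_boot all_order all_algebra all_fingroup.
From mathcomp Require Import reals exp.
From mathcomp Require Import zify ring lra.
Require Import Defs.
Set Implicit Arguments. Unset Strict Implicit. Unset Printing Implicit Defensive.

Lemma leq_expr m n e : m <= n -> m ^ e <= n ^ e.
Proof. by move=> h; elim: e => // e IH; rewrite !expnS leq_mul. Qed.

Lemma ffact_le_exp n k : n ^_ k <= n ^ k.
Proof.
elim: k n => [|k IH] n; first by rewrite ffactn0 expn0.
case: n => [|n]; first by rewrite ffact0n.
rewrite ffactSS expnS; apply: leq_mul => //; apply: leq_trans (IH n) _.
by apply: leq_expr.
Qed.

Lemma bin_le_exp n k : 'C(n, k) <= n ^ k.
Proof.
apply: leq_trans (ffact_le_exp n k); rewrite -bin_ffact.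
by rewrite leq_pmulr // fact_gt0.
Qed.

Section Comb.
Variable gT : finGroupType.
Variable d : nat.
Local Open Scope group_scope.

Definition letter (o : option (bool * gT)) : gT :=
  if o is Some (b, h) then (if b then h else h^-1) else 1.
Definition wprod (w : {ffun 'I_d -> option (bool * gT)}) : gT :=
  \prod_(i < d) letter (w i).
Definition Rset (E : {set gT}) : {set option (bool * gT)} :=
  None |: (Some @: setX setT E).

Lemma card_Rset E : #|Rset E| <= (2 * #|E|).+1.
Proof.
rewrite /Rset cardsU1 -add1n; apply: leq_add; first by case: (_ \notin _).
apply: leq_trans (leq_imset_card _ _) _.
by rewrite cardsX cardsT card_bool.
Qed.

Lemma prod_insub n m (F : 'I_n -> gT) : (n <= m)%N ->
  \prod_(i < m) oapp F 1 (insub (val i)) = \prod_(i < n) F i.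
Proof.
move=> le.
have -> : \prod_(i < n) F i = \prod_(i < n) (fun k => oapp F 1 (insub k)) (val i).
  by apply: eq_bigr => i _; rewrite valK.
rewrite (big_ord_widen m (fun k => oapp F 1 (insub k)) le) [RHS]big_mkcond /=.
apply: eq_bigr => i _; case: ltnP => // h.
by rewrite insubN // -leqNgt.
Qed.

Lemma fiber_sub (E : {set gT}) :
  [set x | is_edge d x E] \subset wprod @: ffun_on (Rset E).
Proof.
apply/subsetP => x; rewrite inE => /andP [_ /existsP [l /andP [_ ]]].
move=> /existsP [h /existsP [a /and3P [/forallP hE _ /eqP hx]]].
apply/imsetP.
exists [ffun i : 'I_d => omap (fun j : 'I_l => (a j, h j)) (insub (val i))].
  apply/ffun_onP => i; rewrite ffunE /Rset.
  case: insubP => [j _ _|_] /=; last by rewrite !inE.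
  apply/setU1P; right; apply/imsetP; exists (a j, h j) => //.
  by apply/setXP; split; [rewrite inE|apply: hE].
rewrite -hx /wprod -(@prod_insub l d); last by rewrite -ltnS ltn_ord.
apply: eq_bigr => i _; rewrite ffunE.
by case: insub.
Qed.

Lemma fiber_card (E : {set gT}) : #|[set x | is_edge d x E]| <= ((2 * #|E|).+1) ^ d.
Proof.
apply: leq_trans (subset_leq_card (fiber_sub E)) _.
apply: leq_trans (leq_imset_card _ _) _.
rewrite card_ffun_on card_ord.
by apply: leq_expr => //; apply: card_Rset.
Qed.

Lemma card_sum (T : finType) (A : {set T}) : #|A| = \sum_(x : T) (x \in A).
Proof. by rewrite -sum1_card big_mkcond; apply: eq_bigr => x _; case: (x \in A). Qed.

Lemma sum_edges k :
  \sum_(x : gT) #|edges_of_size d x k| <= 'C(#|gT|, k) * ((2 * k).+1) ^ d.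
Proof.
have -> : \sum_(x : gT) #|edges_of_size d x k|
    = \sum_(E : {set gT} | #|E| == k) #|[set x | is_edge d x E]|.
  transitivity (\sum_(x : gT) \sum_(E : {set gT} | #|E| == k) (is_edge d x E : nat)).
    apply: eq_bigr => x _; rewrite card_sum [RHS]big_mkcond.
    by apply: eq_bigr => E _; rewrite inE; case: is_edge; case: (#|E| == k).
  rewrite exchange_big; apply: eq_bigr => E _; rewrite card_sum.
  by apply: eq_bigr => x _; rewrite inE.
rewrite -card_draws -sum_nat_cond_const; apply: leq_sum => E /eqP hE.
by rewrite -hE; apply: fiber_card.
Qed.

Definition goodpairs r s t := [set p : {set gT} * {set gT} |
  [&& #|p.1| == r, #|p.2| == s & #|p.1 :&: p.2| == t]].

Lemma sum_pair r s t :
  \sum_(x : gT) \sum_(y : gT) pair_count d x y r s t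
    <= #|goodpairs r s t| * (((2 * r).+1) ^ d * ((2 * s).+1) ^ d).
Proof.
have -> : \sum_(x : gT) \sum_(y : gT) pair_count d x y r s t =
  \sum_(p : {set gT} * {set gT}) \sum_(x : gT) \sum_(y : gT)
   ((p.1 \in edges_of_size d x r) && (p.2 \in edges_of_size d y s)
     && (#|p.1 :&: p.2| == t) : nat).
  rewrite [RHS]exchange_big /=; apply: eq_bigr => x _.
  rewrite [RHS]exchange_big /=; apply: eq_bigr => y _.
  by rewrite /pair_count card_sum; apply: eq_bigr => p _; rewrite inE andbA.
rewrite card_sum big_distrl /=; apply: leq_sum => p _.
rewrite inE.
case: (boolP [&& _, _ & _]) => [/and3P [h1 h2 h3]|hn]; last first.
  rewrite mul0n big1 // => x _; rewrite big1 // => y _.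
  case: (boolP (_ && _)) => // /andP [/andP [ha hb] hc]; case/negP: hn.
  by move: ha hb; rewrite !inE => /andP [_ ->] /andP [_ ->].
rewrite mul1n.
apply: leq_trans (_ : \sum_x \sum_y ((is_edge d x p.1 : nat) * (is_edge d y p.2 : nat)) <= _).
  apply: leq_sum => x _; apply: leq_sum => y _.
  rewrite !inE h1 h2 h3 !andbT.
  by case: is_edge; case: is_edge.
have e1 : forall E : {set gT}, \sum_x (is_edge d x E : nat) = #|[set x | is_edge d x E]|.
  by move=> E; rewrite card_sum; apply: eq_bigr => x _; rewrite inE.
rewrite -(eqP h1) -(eqP h2).
under eq_bigr => x _ do rewrite -big_distrr /=.
by rewrite -big_distrl /= !e1; apply: leq_mul; apply: fiber_card.
Qed.


Lemma card_fset (e : {set gT}) s t :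
  #|[set f : {set gT} | (#|f| == s) && (#|e :&: f| == t)]|
    <= 2 ^ #|e| * 'C(#|gT|, s - t).
Proof.
set A := [set f : {set gT} | _].
pose g := fun f : {set gT} => (f :&: e, f :\: e).
have inj : {in A &, injective g}.
  move=> f1 f2 _ _ [h1 h2].
  by rewrite -(setID f1 e) -(setID f2 e) h1 h2.
rewrite -(card_in_imset inj) -card_powerset -card_draws -cardsX.
apply: subset_leq_card; apply/subsetP => p /imsetP [f].
rewrite inE => /andP [/eqP hs /eqP ht] ->.
apply/setXP; split; first by rewrite powersetE subsetIr.
by rewrite inE cardsD hs setIC ht.
Qed.

Lemma card_good r s t :
  #|goodpairs r s t| <= 'C(#|gT|, r) * (2 ^ r * 'C(#|gT|, s - t)).
Proof.
rewrite card_sum.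
have -> : \sum_(p : {set gT} * {set gT}) (p \in goodpairs r s t : nat) =
  \sum_(e : {set gT}) \sum_(f : {set gT}) ((e, f) \in goodpairs r s t : nat).
  by rewrite pair_bigA; apply: eq_bigr => -[].
rewrite -card_draws -sum_nat_cond_const.
rewrite (bigID (fun e : {set gT} => #|e| == r)) /= addnC big1 ?add0n; last first.
  move=> e he; rewrite big1 // => f _; rewrite inE /=.
  by rewrite (negbTE he).
apply: leq_sum => e /eqP he.
rewrite -he; apply: leq_trans (card_fset e s t).
rewrite card_sum leq_eqVlt; apply/orP; left; apply/eqP.
by apply: eq_bigr => f _; rewrite !inE /= he eqxx.
Qed.
End Comb.

Lemma union_bound (I T : finType) (Q : I -> T -> bool) :
  #|[set x | [exists i, Q i x]]| <= \sum_i #|[set x | Q i x]|.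
Proof.
rewrite card_sum; under [X in _ <= X]eq_bigr do rewrite card_sum.
rewrite exchange_big /=; apply: leq_sum => x _; rewrite inE.
case: (boolP [exists i, Q i x]) => // /existsP [i hi].
by rewrite (bigD1 i) //= inE hi.
Qed.

Lemma card_false_and (T : finType) (P : pred T) : #|[set x | false && P x]| = 0%N.
Proof. by apply: eq_card0 => x; rewrite inE. Qed.
Lemma card_true_and (T : finType) (P : pred T) : #|[set x | true && P x]| = #|[set x | P x]|.
Proof. by apply: eq_card => x; rewrite !inE. Qed.

Import Order.TTheory GRing.Theory Num.Theory.
Local Open Scope ring_scope.

Lemma markov (R : realType) (T : finType) (f : T -> nat) (th : R) (P : pred T) :
  0 <= th -> (forall x, P x -> th <= (f x)%:R) ->
  #|[set x | P x]|%:R * th <= (\sum_x f x)%N%:R.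
Proof.
move=> th0 hP; rewrite mulr_natl -sumr_const natr_sum.
apply: le_trans (_ : \sum_(x in [set x | P x]) (f x)%:R <= _).
  by apply: ler_sum => x; rewrite inE; apply: hP.
rewrite [X in X <= _]big_mkcond /=; apply: ler_sum => x _.
by case: (_ \in _).
Qed.

Section Main.
Variables (R : realType) (gT : finGroupType) (d : nat) (delta : R).
Definition nR : R := #|gT|%:R.
Definition aR : R := nR `^ delta.
Definition C2 : nat := 2 ^ d * (((2 * d).+1) ^ d * ((2 * d).+1) ^ d).

Lemma nR_gt0 : 0 < nR.
Proof. by rewrite /nR ltr0n; apply/card_gt0P; exists 1%g. Qed.

Lemma aR_gt0 : 0 < aR.
Proof. by apply: powR_gt0; apply: nR_gt0. Qed.

Definition condb (x y : gT) (r s t : nat) : bool :=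
  [&& (t <= r)%N, (t <= s)%N, (1 <= t)%N &
    nR `^ ((r + s - t - 1)%N%:R - delta) <= (pair_count d x y r s t)%:R].

Definition adjb (x y : gT) : bool :=
  [&& x != 1%g, y != 1%g, x != y &
    [exists q : 'I_d.+1 * 'I_d.+1 * 'I_d.+1, condb x y q.1.1 q.1.2 q.2]].

Lemma adjP x y : dep_adj d delta x y -> adjb x y.
Proof.
move=> [h1 [h2 [h3 [r [s [t [hr [hs [htr [hts [ht1 hp]]]]]]]]]]].
rewrite /adjb h1 h2 h3 /=; apply/existsP.
have hr' : (r < d.+1)%N by rewrite ltnS.
have hs' : (s < d.+1)%N by rewrite ltnS.
have ht' : (t < d.+1)%N by rewrite ltnS (leq_trans htr hr).
exists (Ordinal hr', Ordinal hs', Ordinal ht') => /=.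
by rewrite /condb htr hts ht1.
Qed.

Lemma pair_bound (b : bool) (r s t : nat) : (r <= d)%N -> (s <= d)%N -> (t <= s)%N ->
  #|[set p : gT * gT | condb (if b then p.1 else p.2) (if b then p.2 else p.1) r s t]|%:R
     * nR `^ ((r + s - t - 1)%N%:R - delta)
  <= (#|gT| ^ (r + s - t) * C2)%:R.
Proof.
move=> hr hs hts.
apply: le_trans (markov (f := fun p : gT * gT =>
   pair_count d (if b then p.1 else p.2) (if b then p.2 else p.1) r s t) _ _) _.
- exact: powR_ge0.
- by move=> p /and4P [_ _ _].
rewrite ler_nat.
have -> : (\sum_(p : gT * gT)
    pair_count d (if b then p.1 else p.2) (if b then p.2 else p.1) r s t
    = \sum_(x : gT) \sum_(y : gT) pair_count d x y r s t)%N.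
  case: b; first by rewrite pair_bigA.
  by rewrite exchange_big pair_bigA.
apply: leq_trans (sum_pair gT d r s t) _.
apply: leq_trans (leq_mul (card_good gT r s t) (leqnn _)) _.
rewrite -addnBA // expnD /C2.
have -> : (#|gT| ^ r * #|gT| ^ (s - t) * (2 ^ d * ((2 * d).+1 ^ d * (2 * d).+1 ^ d))
   = (#|gT| ^ r * (2 ^ d * #|gT| ^ (s - t))) * ((2 * d).+1 ^ d * (2 * d).+1 ^ d))%N.
  by rewrite !mulnA; congr (_ * _ * _); rewrite mulnC mulnA [X in (X * _)%N]mulnC.
apply: leq_mul; first apply: leq_mul; first exact: bin_le_exp.
  by apply: leq_mul; [apply: leq_pexp2l | apply: bin_le_exp].
by apply: leq_mul; apply: leq_expr; rewrite ltnS leq_mul2l ?hr ?hs orbT.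
Qed.

Lemma pair_bound2 (b : bool) (r s t : nat) : (r <= d)%N -> (s <= d)%N ->
  (t <= s)%N -> (t <= r)%N -> (1 <= t)%N ->
  #|[set p : gT * gT | condb (if b then p.1 else p.2) (if b then p.2 else p.1) r s t]|%:R
  <= nR * aR * C2%:R.
Proof.
move=> hr hs hts htr ht1.
have := pair_bound b hr hs hts.
set c := (#|_|%:R : R).
have [k hk] : exists k, (r + s - t = k.+1)%N.
  by exists (r + s - t).-1; lia.
rewrite hk subSS subn0 powRB; last first.
  by apply/implyP => _; rewrite gt_eqF //; apply: nR_gt0.
rewrite powR_mulrn; last exact: ltW nR_gt0.
rewrite -/aR natrM natrX -/nR exprS => h.
have xpos : 0 < nR ^+ k by apply: exprn_gt0; apply: nR_gt0.
have apos := aR_gt0.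
have h2 : c * nR ^+ k <= nR * aR * C2%:R * nR ^+ k.
  have := ler_wpM2r (ltW apos) h.
  have -> : c * (nR ^+ k / aR) * aR = c * nR ^+ k.
    by rewrite -mulrA mulrVK //; rewrite unitfE gt_eqF.
  by move=> h3; apply: (le_trans h3); rewrite le_eqVlt; apply/orP; left; apply/eqP; ring.
by rewrite -(ler_pM2r xpos).
Qed.

Definition adj2 (x y : gT) := adjb x y || adjb y x.
Definition deg (x : gT) := #|[set y | adj2 x y]|.

Lemma total_deg :
  (\sum_x deg x)%N%:R <= (2 * d.+1 ^ 3)%N%:R * (nR * aR * C2%:R).
Proof.
have e : (\sum_x deg x = #|[set p : gT * gT | adj2 p.1 p.2]|)%N.
  rewrite card_sum (eq_bigr (fun p : gT * gT => (adj2 p.1 p.2 : nat))); last first.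
    by move=> p _; rewrite inE.
  rewrite -(pair_bigA _ (fun x y => (adj2 x y : nat))); apply: eq_bigr => x _.
  by rewrite /deg card_sum; apply: eq_bigr => y _; rewrite !inE.
pose Q := fun (bq : bool * ('I_d.+1 * 'I_d.+1 * 'I_d.+1)) (p : gT * gT) =>
  condb (if bq.1 then p.1 else p.2) (if bq.1 then p.2 else p.1)
     bq.2.1.1 bq.2.1.2 bq.2.2.
have sub : [set p : gT * gT | adj2 p.1 p.2] \subset [set p | [exists bq, Q bq p]].
  apply/subsetP => p; rewrite !inE /adj2 /adjb.
  case/orP => /and4P [_ _ _ /existsP [q hq]]; apply/existsP.
    by exists (true, q).
  by exists (false, q).
rewrite e; apply: le_trans (_ : (#|[set p | [exists bq, Q bq p]]|)%:R <= _).
  by rewrite ler_nat; apply: subset_leq_card.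
apply: le_trans (_ : (\sum_bq #|[set p | Q bq p]|)%N%:R <= _).
  by rewrite ler_nat; apply: union_bound.
rewrite natr_sum.
apply: le_trans (_ : \sum_(bq : bool * ('I_d.+1 * 'I_d.+1 * 'I_d.+1)) (nR * aR * C2%:R) <= _).
  apply: ler_sum => -[b [[r s] t]] _.
  case: (boolP [&& (t <= s)%N, (t <= r)%N & (1 <= t)%N]) => [/and3P [h1 h2 h3]|hn].
    by apply: pair_bound2; rewrite // -ltnS.
  have -> : [set p | Q (b, (r, s, t)) p] = set0.
    apply/setP => p; rewrite !inE /Q /condb /=.
    apply/negP => /and4P [a1 a2 a3 _]; case/negP: hn; by rewrite a1 a2 a3.
  rewrite cards0; apply: mulr_ge0; first apply: mulr_ge0; last by [].
    exact: ltW nR_gt0.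
  exact: ltW aR_gt0.
rewrite sumr_const card_prod card_bool !card_prod !card_ord.
by rewrite [X in _ <= X]mulr_natl expnS expnS expn1 !mulnA.
Qed.

Definition C1 : nat := ((2 * d).+1) ^ d.

Lemma bad1k_bound k : (1 <= k)%N -> (k <= d)%N ->
  #|[set x : gT | nR `^ ((k - 1)%N%:R + delta) < #|edges_of_size d x k|%:R]|%:R * aR
  <= nR * C1%:R.
Proof.
move=> hk1 hkd.
have := markov (f := fun x : gT => #|edges_of_size d x k|)
  (th := nR `^ ((k - 1)%N%:R + delta))
  (P := fun x => nR `^ ((k - 1)%N%:R + delta) < #|edges_of_size d x k|%:R)
  (powR_ge0 _ _) (fun x h => ltW h).
set c := (#|_|%:R : R).
move=> h1.
have h2 : (\sum_(x : gT) #|edges_of_size d x k|)%N%:R <= nR ^+ (k - 1) * nR * C1%:R :> R.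
  rewrite -exprSr subn1 prednK // /nR -natrX -natrM ler_nat.
  apply: leq_trans (sum_edges gT d k) _.
  apply: leq_mul; first exact: bin_le_exp.
  by apply: leq_expr; rewrite ltnS leq_mul2l hkd orbT.
have h3 := le_trans h1 h2.
rewrite powRD in h3; last by apply/implyP => _; rewrite gt_eqF //; apply: nR_gt0.
rewrite powR_mulrn in h3; last exact: ltW nR_gt0.
rewrite -/aR in h3.
have xpos : 0 < nR ^+ (k - 1) by apply: exprn_gt0; apply: nR_gt0.
rewrite -(ler_pM2l xpos).
have -> : nR ^+ (k - 1) * (c * aR) = c * (nR ^+ (k - 1) * aR) by ring.
by move: h3; rewrite -!mulrA.
Qed.

Definition bad1 : {set gT} := [set x | [exists k : 'I_d.+1, (1 <= k)%N &&
   (nR `^ ((k - 1)%N%:R + delta) < #|edges_of_size d x k|%:R)]].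

Lemma bad1_bound : #|bad1|%:R * aR <= d.+1%:R * (nR * C1%:R).
Proof.
have := union_bound (fun (k : 'I_d.+1) (x : gT) => (1 <= k)%N &&
   (nR `^ ((k - 1)%N%:R + delta) < #|edges_of_size d x k|%:R)).
rewrite -/bad1 -(ler_nat R) natr_sum => h.
have apos := aR_gt0.
apply: le_trans (ler_wpM2r (ltW apos) h) _.
rewrite mulr_suml.
apply: le_trans (_ : \sum_(k : 'I_d.+1) (nR * C1%:R) <= _); last first.
  by rewrite sumr_const card_ord mulr_natl.
apply: ler_sum => k _.
case: (posnP k) => [k0|kpos].
  rewrite card_false_and mul0r; apply: mulr_ge0; first exact: ltW nR_gt0.
  by [].
rewrite card_true_and.
by apply: bad1k_bound => //; rewrite -ltnS.
Qed.

Definition K0 : R := (2 * d.+1 ^ 3)%N%:R * C2%:R.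
Definition Kr : R := 4 * K0 * aR.
Definition bad2 : {set gT} := [set x | Kr < (deg x)%:R].

Lemma K0_gt0 : 0 < K0.
Proof. by rewrite /K0 mulr_gt0 // ltr0n /C2 ?muln_gt0 ?expn_gt0. Qed.

Lemma bad2_bound : 4 * #|bad2|%:R <= nR.
Proof.
have kpos := K0_gt0; have apos := aR_gt0.
have th0 : 0 <= Kr.
  by rewrite /Kr; apply: ltW; rewrite mulr_gt0 // mulr_gt0.
have h := markov (f := deg) (P := fun x => Kr < (deg x)%:R) th0 (fun x h => ltW h).
rewrite -/bad2 in h.
have h2 := le_trans h total_deg.
have : (4 * #|bad2|%:R) * (K0 * aR) <= nR * (K0 * aR).
  have e1 : 4 * #|bad2|%:R * (K0 * aR) = #|bad2|%:R * Kr by rewrite /Kr; ring.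
  have e2 : nR * (K0 * aR) = (2 * d.+1 ^ 3)%N%:R * (nR * aR * C2%:R) by rewrite /K0; ring.
  by rewrite e1 e2.
by rewrite ler_pM2r // mulr_gt0.
Qed.

Definition V : {set gT} := [set x | x != 1%g] :\: (bad1 :|: bad2).
Definition indepb (S : {set gT}) :=
  (S \subset V) && [forall x in S, forall y in S, ~~ adjb x y].
Definition Smax : {set gT} := [arg max_(S > set0 | indepb S) #|S|].

Lemma indep0 : indepb set0.
Proof. by rewrite /indepb sub0set; apply/forall_inP => x; rewrite inE. Qed.

Lemma Smax_indep : indepb Smax.
Proof. by rewrite /Smax; case: arg_maxnP => //; exact: indep0. Qed.

Lemma Smax_max S : indepb S -> (#|S| <= #|Smax|)%N.
Proof. by rewrite /Smax; case: arg_maxnP => [|S0 _ h]; [exact: indep0 | apply: h]. Qed.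

Lemma cover_V : (#|V| <= #|Smax| + \sum_(s in Smax) deg s)%N.
Proof.
have sub : V \subset Smax :|: [set v | [exists s, (s \in Smax) && adj2 s v]].
  apply/subsetP => v hv; rewrite inE; case: (boolP (v \in Smax)) => //= hvS.
  rewrite inE; apply: contraT => hno.
  have hind : indepb (v |: Smax).
    have /andP [hsub /forall_inP hall] := Smax_indep.
    apply/andP; split.
      by rewrite subUset sub1set hv hsub.
    apply/forall_inP => x /setU1P hx; apply/forall_inP => y /setU1P hy.
    have nadj : forall s, s \in Smax -> ~~ adj2 s v.
      by move=> s hs; apply/negP => ha; case/negP: hno; apply/existsP; exists s; rewrite hs.
    case: hx => [->|hx]; case: hy => [->|hy].
    - by rewrite /adjb eqxx !andbF.
    - by have := nadj y hy; rewrite /adj2 negb_or => /andP [_ ->].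
    - by have := nadj x hx; rewrite /adj2 negb_or => /andP [->].
    - by have /forall_inP := hall x hx; apply.
  have := Smax_max hind; rewrite cardsU1 hvS add1n ltnn //.
apply: leq_trans (subset_leq_card sub) _.
apply: leq_trans (leq_card_setU _ _) _; rewrite leq_add2l.
apply: leq_trans (union_bound _) _.
rewrite [X in (_ <= X)%N]big_mkcond /=; apply: leq_sum => s _.
case: (s \in Smax); first by rewrite card_true_and.
by rewrite card_false_and.
Qed.

Lemma Smax_bound : #|V|%:R <= #|Smax|%:R * (1 + Kr).
Proof.
apply: le_trans (_ : (#|Smax| + \sum_(s in Smax) deg s)%N%:R <= _).
  by rewrite ler_nat cover_V.
rewrite natrD natr_sum mulrDr mulr1 lerD2l.
apply: le_trans (_ : \sum_(s in Smax) Kr <= _).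
  apply: ler_sum => s hs.
  have /andP [/subsetP hsub _] := Smax_indep.
  have := hsub s hs; rewrite !inE negb_or => /andP [hb2 _].
  by move: hb2 => /andP [_]; rewrite ltNge => /negPn.
by rewrite sumr_const mulr_natl.
Qed.

Lemma V_bound : (#|gT| <= #|V| + 1 + #|bad1| + #|bad2|)%N.
Proof.
have sub : [set: gT] \subset V :|: [set 1%g] :|: bad1 :|: bad2.
  apply/subsetP => x _; rewrite !inE.
  by case: (x == 1%g); case: [exists k, _]; case: (Kr < _).
rewrite -cardsT; apply: leq_trans (subset_leq_card sub) _.
apply: leq_trans (leq_card_setU _ _) _; rewrite leq_add2r.
apply: leq_trans (leq_card_setU _ _) _; rewrite leq_add2r.
apply: leq_trans (leq_card_setU _ _) _; rewrite leq_add2l.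
by rewrite cards1.
Qed.
End Main.

Unset Implicit Arguments.

Lemma final_real (R : realType) (n a v s b1 b2 K0 C1 D : R) :
  8 <= n -> 0 < a -> 0 < K0 -> 1 <= C1 -> 1 <= D ->
  2 + 8 * K0 + 8 * D * C1 <= a ->
  n <= v + 1 + b1 + b2 -> b1 * a <= D * (n * C1) -> 4 * b2 <= n ->
  v <= s * (1 + 4 * K0 * a) -> 0 <= s ->
  n <= s * a ^+ 3.
Proof.
move=> n8 apos kpos c1 d1 aM hV hb1 hb2 hS s0.
have a1 : 1 <= a by nra.
have hb1' : 8 * b1 <= n.
  have : 8 * b1 * a <= n * a.
    apply: le_trans (_ : 8 * (D * (n * C1)) <= _); first by nra.
    have : 8 * D * C1 <= a by nra.
    have n0 : 0 <= n by nra.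
    nra.
  by rewrite ler_pM2r.
have h2v : n <= 2 * v by nra.
have a3 : 2 + 8 * K0 * a <= a ^+ 3.
  have e : a ^+ 3 = a * a * a by rewrite !exprS expr0 mulr1 mulrA.
  rewrite e.
  have : 2 + 8 * K0 <= a by nra.
  nra.
nra.
Qed.

Theorem lemma16 (R : realType) (d : nat) (delta eps : R) :
  (2 <= d)%N -> 0 < delta -> 0 < eps ->
  delta < eps / 4 -> delta < 1 / (4 * d%:R) ->
  exists N0 : nat, forall gT : finGroupType,
    (N0 <= #|gT|)%N ->
    ((4 ^ (d + 2) * d ^ (d + 3))%N%:R <= #|gT|%:R `^ delta) ->
    exists I : {set gT},
      [/\ dep_independent d delta I,
          #|gT|%:R `^ (1 - 3 * delta) <= #|I|%:R &
          forall x, x \in I -> forall k : nat, (1 <= k <= d)%N ->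
            #|edges_of_size d x k|%:R
              <= #|gT|%:R `^ ((k - 1)%N%:R + delta)].
Proof.
move=> hd hdel _ _ _.
pose M : R := 2 + 8 * K0 R d + 8 * d.+1%:R * (C1 d)%:R.
have M0 : 0 <= M.
  rewrite /M; apply: addr_ge0; first apply: addr_ge0 => //.
    by apply: mulr_ge0 => //; apply: ltW; apply: K0_gt0.
  by apply: mulr_ge0; first apply: mulr_ge0.
pose N0 := maxn 8 (Num.Def.archi_bound (M `^ delta^-1)).
exists N0 => gT hN _.
have hN8 : (8 <= #|gT|)%N by apply: leq_trans hN; rewrite leq_maxl.
have n8 : 8 <= nR R gT by rewrite /nR (ler_nat R 8).
have aM : M <= aR gT delta.
  have hb : M `^ delta^-1 <= nR R gT.
    apply: le_trans (ltW (archi_boundP (powR_ge0 _ _))) _.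
    by rewrite /nR ler_nat; apply: leq_trans hN; rewrite leq_maxr.
  have := ge0_ler_powR (ltW hdel) (powR_ge0 M delta^-1) (ltW (nR_gt0 R gT)) hb.
  rewrite -powRrM mulVf ?gt_eqF // powRr1 //.
have apos := aR_gt0 gT delta.
have /andP [hsub /forall_inP hall] := Smax_indep gT d delta.
exists (Smax gT d delta); split.
- split.
    apply/negP => h1; have := subsetP hsub _ h1; rewrite !inE eqxx.
    by rewrite andbF.
  move=> x y hx hy hxy /adjP hadj.
  by have /forall_inP := hall x hx; move/(_ y hy); rewrite hadj.
- rewrite powRB; last by apply/implyP => _; rewrite gt_eqF // nR_gt0.
  rewrite powRr1; last exact: ltW (nR_gt0 R gT).
  rewrite [3 * delta]mulrC powRrM -/(aR gT delta).
  rewrite powR_mulrn; last exact: ltW.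
  rewrite ler_pdivrMr; last by apply: exprn_gt0.
  apply: (final_real R (nR R gT) (aR gT delta) #|V gT d delta|%:R _
     #|bad1 gT d delta|%:R #|bad2 gT d delta|%:R (K0 R d) (C1 d)%:R d.+1%:R) => //.
  + exact: K0_gt0.
  + by rewrite ler1n /C1 expn_gt0.
  + by rewrite ler1n.
  + by rewrite /nR (_ : (1:R) = 1%:R) // -!natrD ler_nat; apply: V_bound.
  + exact: bad1_bound.
  + exact: bad2_bound.
  + exact: Smax_bound.
- move=> x hx k /andP [hk1 hkd].
  have := subsetP hsub _ hx; rewrite !inE negb_or => /andP [/andP [hb1 _] _].
  rewrite leNgt; apply/negP => hlt; case/negP: hb1.
  apply/existsP; exists (Ordinal (hkd : (k < d.+1)%N)) => /=.
  by rewrite hk1.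
Qed.
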